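(* Let $G$ be a locally compact group, $O$ a neighborhood of the unit, $K\subseteq G$ compact, and $F\subseteq G$ a finite set with $K\subseteq FO$ and $|F|=(K:O)$. Then for every $S\subseteq F$, $(SO:O)=|S|$.
   Context: For $X\subseteq G$ and a neighborhood $O$ of the unit, $(X:O)$ denotes the minimal $n$ such that there is a set $F'\subseteq G$ with $|F'|=n$ and $X\subseteq F'O$, where $F'O=\{fo: f\in F', o\in O\}$. *)

(* Defs.v *)
From HB Require Import structures.
From mathcomp Require Import all_boot all_order all_algebra.
From mathcomp Require Import finmap.
From mathcomp Require Import all_classical all_reals all_analysis.

Set Implicit Arguments.
Unset Strict Implicit.
Unset Printing Implicit Defensive.

Local Open Scope classical_set_scope.


Definition topological_group (G : topologicalType)
  (mul : G -> G -> G) (inv : G -> G) (e : G) : Prop :=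
  [/\ associative mul, left_id e mul, left_inverse e inv mul,
      continuous (fun p : G * G => mul p.1 p.2) & continuous inv].

Definition locally_compact_space (G : topologicalType) : Prop :=
  locally_compact [set: G].

Definition setmul (G : Type) (mul : G -> G -> G) (A B : set G) : set G :=
  [set mul a b | a in A & b in B].

Definition covered_by (G : choiceType) (mul : G -> G -> G)
  (X O : set G) (n : nat) : Prop :=
  exists F' : {fset G}, (#|` F'|)%fset = n /\ X `<=` setmul mul [set` F'] O.

Lemma covnum_ex (G : choiceType) (mul : G -> G -> G) (X O : set G) :
  (exists n, covered_by mul X O n) ->
  exists n, (fun n => `[< covered_by mul X O n >]) n.
Proof. by move=> [n h]; exists n; apply/asboolP. Qed.

(* (X : O) = the minimal n such that X ⊆ F' O for some F' with |F'| = n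
   (set to 0 when no such n exists, which never happens in our uses). *)
Definition covnum (G : choiceType) (mul : G -> G -> G) (X O : set G) : nat :=
  match pselect (exists n, covered_by mul X O n) with
  | left h => ex_minn (covnum_ex h)
  | right _ => 0%N
  end.

(* Main.v *)
Require Import Defs.
From HB Require Import structures.
From mathcomp Require Import all_boot all_order all_algebra.
From mathcomp Require Import finmap.
From mathcomp Require Import all_classical all_reals all_analysis.
From mathcomp Require Import zify.
From Stdlib Require Import Lia.

Local Open Scope classical_set_scope.

Lemma covnum_le (G : choiceType) (mul : G -> G -> G) (X O : set G) n :
  Defs.covered_by mul X O n -> (covnum mul X O <= n)%N.
Proof.
move=> h; rewrite /covnum; case: pselect => [h'|]; last by move=> /(_ (ex_intro _ n h)).
case: ex_minnP => m _; apply; exact/asboolP.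
Qed.

Lemma covnum_cov (G : choiceType) (mul : G -> G -> G) (X O : set G) n :
  Defs.covered_by mul X O n -> Defs.covered_by mul X O (covnum mul X O).
Proof.
move=> h; rewrite /covnum; case: pselect => [h'|]; last by move=> /(_ (ex_intro _ n h)).
by case: ex_minnP => m /asboolP.
Qed.

Arguments covnum_le {G mul X O n}.
Arguments covnum_cov {G mul X O n}.

Theorem proposition6 (G : topologicalType) (mul : G -> G -> G) (inv : G -> G)
  (e : G) (O K : set G) (F : {fset G}) :
  topological_group mul inv e ->
  locally_compact_space G ->
  nbhs e O ->
  compact K ->
  K `<=` setmul mul [set` F] O ->
  (#|` F|)%fset = covnum mul K O ->
  forall S : {fset G}, (S `<=` F)%fset ->
    covnum mul (setmul mul [set` S] O) O = (#|` S|)%fset.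
Proof.
move=> _ _ _ _ KF hF S SF.
have cS : Defs.covered_by mul (setmul mul [set` S] O) O #|` S|%fset by exists S; split.
have le := covnum_le cS.
have [F2 [cF2 sub2]] := covnum_cov cS.
apply/eqP; rewrite eqn_leq le /=; rewrite leqNgt; apply/negP => lt.
set F3 := ((F `\` S) `|` F2)%fset.
have cK : Defs.covered_by mul K O #|` F3|%fset.
  exists F3; split => //.
  move=> k /KF [f ff [y Oo <-]].
  have [fS|fS] := boolP (f \in S).
    have : setmul mul [set` S] O (mul f y) by exists f => //; exists y.
    move=> /sub2 [g gF2 [y' Oo' <-]]; exists g; last by exists y'.
    by rewrite /= in_fsetU gF2 orbT.
  exists f; last by exists y.
  by rewrite /= in_fsetU in_fsetD fS ff.
have := covnum_le cK; rewrite -hF.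
have h1 := leq_card_fsetU (F `\` S)%fset F2.
have h2 := cardfsDS SF.
have h3 : (#|` S| <= #|` F|)%N by apply: fsubset_leq_card.
move: h1; rewrite -/F3 => h1.
rewrite cF2 in h1.
case: h1 => h1 _.
move: h1 h2 h3 lt; clearbody F3; set a := #|` F3|%fset; set b := #|` (F `\` S)%fset|%fset; set c := covnum _ _ _; set d := #|` F|%fset; set s := #|` S|%fset.
clearbody a b c d s. lia.
Qed.
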